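(* Let $G=(V,E)$ be an unweighted $n$-vertex graph with girth $g$. Consider a non-contractive embedding of $G$ into a tree $T$. If an edge $e\in E$ is chosen uniformly at random, then $\Pr[d_T(e)\ge g/3-1]\ge(|E|-(n-1))/|E|$.
   Context: $G$ induces the shortest-path metric $d_G$ with unit edge lengths. An embedding into a tree $T$ maps $V$ into the vertices of an edge-weighted tree with shortest-path metric $d_T$; non-contractive means $d_T(x,y)\ge d_G(x,y)$ for all $x,y$, in particular $d_T(e)\ge1$ for each edge. For $e=(x,y)$, $d_T(e)$ denotes the $T$-distance between the images of $x$ and $y$. *)

(* Defs.v *)
From HB Require Import structures.
From mathcomp Require Import all_boot all_order all_algebra.
Set Implicit Arguments. Unset Strict Implicit. Unset Printing Implicit Defensive.
Import Order.TTheory GRing.Theory Num.Theory.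
Local Open Scope ring_scope.

Definition simple_graph (T : finType) (e : rel T) : Prop :=
  symmetric e /\ irreflexive e.

Definition edges (T : finType) (e : rel T) : {set {set T}} :=
  [set [set u.1; u.2] | u in [set u : T * T | e u.1 u.2]].

Definition walk (T : finType) (e : rel T) (x y : T) (k : nat) : Prop :=
  exists s : seq T, size s = k /\ path e x s /\ last x s = y.

Definition is_gdist (T : finType) (e : rel T) (x y : T) (d : nat) : Prop :=
  walk e x y d /\ forall j, walk e x y j -> (d <= j)%N.

Definition is_cycle (T : finType) (e : rel T) (c : seq T) : Prop :=
  (3 <= size c)%N /\ uniq c /\ cycle e c.

Definition girth (T : finType) (e : rel T) (g : nat) : Prop :=
  (exists c, is_cycle e c /\ size c = g) /\
  forall c, is_cycle e c -> (g <= size c)%N.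

Fixpoint pweight (R : numDomainType) (U : Type) (w : U -> U -> R) (x : U) (s : seq U) : R :=
  if s is y :: s' then w x y + pweight w y s' else 0.

Definition weighted_tree (R : numDomainType) (U : finType) (eT : rel U) (w : U -> U -> R) : Prop :=
  simple_graph eT /\ (forall a b, connect eT a b) /\ (forall c, ~ is_cycle eT c) /\
  (forall a b, eT a b -> 0 < w a b) /\ (forall a b, w a b = w b a).

Definition is_tdist (R : numDomainType) (U : finType) (eT : rel U) (w : U -> U -> R)
  (a b : U) (r : R) : Prop :=
  (exists s, path eT a s /\ last a s = b /\ pweight w a s = r) /\
  (forall s, path eT a s -> last a s = b -> r <= pweight w a s).

(* Main.v *)
Require Import Defs.
From HB Require Import structures.
From mathcomp Require Import all_boot all_order all_algebra.
From mathcomp Require Import lra.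
Import Order.TTheory GRing.Theory Num.Theory.
Local Open Scope ring_scope.
Set Implicit Arguments. Unset Strict Implicit. Unset Printing Implicit Defensive.

Section Gen.
Variable T : finType.
Implicit Types (r : rel T).

Lemma set2_eq (u v a b : T) : [set u; v] = [set a; b] -> u != v ->
  (u = a /\ v = b) \/ (u = b /\ v = a).
Proof.
move=> E nuv.
have : u \in [set a; b] by rewrite -E !inE eqxx.
have : v \in [set a; b] by rewrite -E !inE eqxx orbT.
rewrite !inE => /orP[]/eqP Ev /orP[]/eqP Eu; subst; rewrite ?eqxx in nuv; by [left|right].
Qed.

Definition rmW r (a b : T) (W : pred T) : rel T :=
  [rel u v | [&& r u v, [set u; v] != [set a; b], W u & W v]].

Lemma rmW_path_in r a b W x p : path (rmW r a b W) x p -> p != [::] ->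
  forall z, z \in x :: p -> W z.
Proof.
elim: p x => [|y p IH] x //= /andP[/and4P[_ _ Wx Wy] Hp] _ z.
rewrite inE => /orP[/eqP->//|].
case: p IH Hp => [|y' p] IH Hp; first by rewrite inE => /eqP->.
by apply: IH.
Qed.

Lemma rmW_sub r a b W : subrel (rmW r a b W) r.
Proof. by move=> u v /and4P[]. Qed.

Lemma cyc_of_connect r a b (W : pred T) : symmetric r -> irreflexive r -> r a b ->
  connect (rmW r a b W) a b -> exists c, is_cycle r c /\ {subset c <= W}.
Proof.
move=> sr ir rab /connectP[p Hp Eb].
move: Eb; case: (shortenP Hp) => p' Hp' Hu _ Eb; subst b.
have np : p' != [::].
  by apply/eqP => E; rewrite E /= ir in rab.
exists (a :: p'); split; last first.
  move=> z Hz; rewrite unfold_in; exact: (rmW_path_in Hp' np Hz).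
split; last split => //.
  clear Hp; case: p' Hp' Hu np rab => [|y [|y' p']] //= /andP[/and4P[_ H _ _] _]; by rewrite eqxx in H.
rewrite /= rcons_path (sub_path (@rmW_sub r a (last a p') W) Hp') /=.
by rewrite sr.
Qed.


Lemma set2C (u v : T) : [set u; v] = [set v; u].
Proof. by apply/setP => z; rewrite !inE orbC. Qed.

Lemma rmW_sym r a b W : symmetric r -> symmetric (rmW r a b W).
Proof.
by move=> sr u v; rewrite /rmW /= sr set2C; case: (W u); case: (W v); rewrite ?andbF ?andbT.
Qed.

Fixpoint par (A : {set T}) (x : T) (s : seq T) : bool :=
  if s is y :: s' then ([set x; y] == A) (+) par A y s' else false.

Lemma par_cat A x s1 s2 : par A x (s1 ++ s2) = par A x s1 (+) par A (last x s1) s2.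
Proof. by elim: s1 x => [|y s1 IH] x //=; rewrite IH addbA. Qed.

Lemma side_step r a b W u y : symmetric r -> irreflexive r -> ~~ connect (rmW r a b W) a b ->
  r u y -> W u -> W y ->
  ([set u; y] == [set a; b]) = connect (rmW r a b W) a u (+) connect (rmW r a b W) a y.
Proof.
move=> sr ir nc ruy Wu Wy.
case: eqP => [E|/eqP NE].
  have nuy : u != y by apply/eqP => E'; rewrite E' ir in ruy.
  case: (set2_eq E nuy) => [[-> ->]|[-> ->]]; rewrite connect0 (negbTE nc) //.
have H1 : rmW r a b W u y by rewrite /rmW /= ruy NE Wu Wy.
have H2 : rmW r a b W y u by rewrite rmW_sym.
case Cu: (connect _ a u); case Cy: (connect _ a y) => //.
  by rewrite (connect_trans Cu (connect1 H1)) in Cy.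
by rewrite (connect_trans Cy (connect1 H2)) in Cu.
Qed.

Lemma par_side r a b W u t : symmetric r -> irreflexive r -> ~~ connect (rmW r a b W) a b ->
  path r u t -> W u -> all W t ->
  par [set a; b] u t = connect (rmW r a b W) a u (+) connect (rmW r a b W) a (last u t).
Proof.
move=> sr ir nc; elim: t u => [|y t IH] u /=; first by rewrite addbb.
move=> /andP[ruy Hp] Wu /andP[Wy Wt].
rewrite IH // (side_step sr ir nc ruy Wu Wy).
by rewrite -addbA (addbA (connect _ a y)) addbb.
Qed.

Lemma closed_even r (g : nat) a b x s : symmetric r -> irreflexive r ->
  (forall c, is_cycle r c -> (g <= size c)%N) ->
  path r x s -> last x s = x -> (size s < g)%N -> r a b -> par [set a; b] x s = false.
Proof.
move=> sr ir gir Hp Hl Hs rab.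
case: s Hp Hl Hs => [|y s'] // Hp Hl Hs.
set s := y :: s' in Hp Hl Hs *.
have xs : x \in s by rewrite -{1}Hl /s /= mem_last.
pose W := fun u => u \in s.
case: (boolP (connect (rmW r a b W) a b)) => [C|nc].
  have [c [Hcyc cW]] := cyc_of_connect sr ir rab C.
  have H1 := gir c Hcyc; case: Hcyc => _ [uc _].
  have H2 : (size c <= size s)%N.
    by apply: uniq_leq_size uc _ => z /cW; rewrite unfold_in.
  by have := leq_ltn_trans (leq_trans H1 H2) Hs; rewrite ltnn.
rewrite (par_side sr ir nc Hp) //.
by rewrite Hl addbb.
Qed.

End Gen.

Section Tree.
Variables (R : realFieldType) (U : finType) (eT : rel U) (w : U -> U -> R) (dT : U -> U -> R).
Hypothesis seT : symmetric eT.
Hypothesis ieT : irreflexive eT.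
Hypothesis cT : forall a b, connect eT a b.
Hypothesis aT : forall c, ~ is_cycle eT c.
Hypothesis wpos : forall a b, eT a b -> 0 < w a b.
Hypothesis wsym : forall a b, w a b = w b a.
Hypothesis Hd : forall a b, is_tdist eT w a b (dT a b).

Definition sd (i : U * U) (v : U) := connect (rmW eT i.1 i.2 predT) i.1 v.

Arguments sd : simpl never.

Lemma bridge i : eT i.1 i.2 -> ~~ connect (rmW eT i.1 i.2 predT) i.1 i.2.
Proof.
move=> Ei; apply/negP => C.
by have [c [Hc _]] := cyc_of_connect seT ieT Ei C; apply: (aT Hc).
Qed.

Lemma sd_step i u y : eT i.1 i.2 -> eT u y ->
  ([set u; y] == [set i.1; i.2]) = sd i u (+) sd i y.
Proof. by move=> Ei Euy; apply: side_step => //; apply: bridge. Qed.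

Definition C a b := \sum_(i : U * U | eT i.1 i.2) w i.1 i.2 * (sd i a (+) sd i b)%:R.

Lemma C_edge a u : eT a u -> C a u = w a u *+ 2.
Proof.
move=> Eau.
have nau : a != u by apply/eqP => E; rewrite E ieT in Eau.
rewrite /C (bigD1 (a, u)); last by [].
rewrite /= (bigD1 (u, a)) /=; last first.
  rewrite seT Eau /=; apply/eqP => -[E _]; by rewrite E eqxx in nau.
rewrite big1; last first.
  move=> [p q] /andP[/andP[Epq N1] N2].
  case H: (sd (p, q) a (+) sd (p, q) u); last by rewrite mulr0.
  have := @sd_step (p, q) a u Epq Eau; rewrite H => /eqP E.
  case: (set2_eq E nau) => [[E1 E2]|[E1 E2]].
    have E1' : a = p := E1; have E2' : u = q := E2.
    by rewrite E1' E2' eqxx in N1.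
  have E1' : a = q := E1; have E2' : u = p := E2.
  by rewrite E1' E2' eqxx in N2.
have h1 : sd (a, u) a (+) sd (a, u) u = true.
  by rewrite -(@sd_step (a, u) a u Eau Eau); exact: eqxx.
have h2 : sd (u, a) a (+) sd (u, a) u = true.
  have Eua : eT (u, a).1 (u, a).2 by rewrite /= seT.
  rewrite -(@sd_step (u, a) a u Eua Eau); apply/eqP; exact: set2C.
by rewrite h1 h2 !mulr1 addr0 wsym mulr2n.
Qed.
Lemma C_tri a u b : C a b <= C a u + C u b.
Proof.
rewrite /C -big_split /=; apply: ler_sum => i Ei.
rewrite -mulrDr ler_wpM2l ?(ltW (wpos Ei)) // -natrD ler_nat.
by case: (sd i a); case: (sd i u); case: (sd i b).
Qed.

Lemma C_path a s : path eT a s -> C a (last a s) <= (pweight w a s) *+ 2.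
Proof.
elim: s a => [|u s IH] a /=.
  by move=> _; rewrite /C big1 ?mul0rn // => i _; rewrite addbb mulr0.
move=> /andP[Eau Hp]; apply: (le_trans (C_tri a u _)).
by rewrite C_edge // mulrnDl lerD2l IH.
Qed.

Lemma sd_const i u t : eT i.1 i.2 -> path eT u t ->
  (i.1 \notin u :: t) || (i.2 \notin u :: t) ->
  sd i u = sd i (last u t).
Proof.
move=> Ei; elim: t u => [|y t IH] u //= /andP[Euy Hp] Hn.
have F : ([set u; y] == [set i.1; i.2]) = false.
  apply/eqP => E.
  have h1 : i.1 \in [set u; y] by rewrite E !inE eqxx.
  have h2 : i.2 \in [set u; y] by rewrite E !inE eqxx orbT.
  move: h1 h2 Hn; rewrite !inE => /orP[]/eqP-> /orP[]/eqP->;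
    by rewrite !eqxx ?orbT.
rewrite -IH //; last first.
  move: Hn; rewrite !inE !negb_or.
  by case/orP => /andP[_ ->]; rewrite ?orbT.
by move: F; rewrite (sd_step Ei Euy); case: (sd i u); case: (sd i y).
Qed.

Lemma C_uniq a s : path eT a s -> uniq (a :: s) -> C a (last a s) = (pweight w a s) *+ 2.
Proof.
elim: s a => [|u s IH] a /=.
  by move=> _ _; rewrite /C big1 ?mul0rn // => i _; rewrite addbb mulr0.
move=> /andP[Eau Hp] /andP[nas Us].
rewrite mulrnDl -C_edge // -IH //.
rewrite /C -big_split /=; apply: eq_bigr => i Ei.
rewrite -mulrDr -natrD.
case E1: (sd i a (+) sd i u); last by case: (sd i a) (sd i u) (sd i (last u s)) E1 => [] [] [].
have : [set a; u] == [set i.1; i.2] by rewrite (sd_step Ei Eau).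
move/eqP => E.
have ha : a \in [set i.1; i.2] by rewrite -E !inE eqxx.
have Hn : (i.1 \notin u :: s) || (i.2 \notin u :: s).
  by move: ha; rewrite !inE => /orP[]/eqP <-; rewrite nas ?orbT.
have := sd_const Ei Hp Hn.
by case: (sd i a) (sd i u) (sd i (last u s)) E1 => [] [] [] //= _ ->.
Qed.

Lemma upath a b : exists s, [/\ path eT a s, uniq (a :: s) & last a s = b].
Proof.
have /connectP[p Hp ->] := cT a b.
by case: (shortenP Hp) => p' Hp' Hu _; exists p'.
Qed.

Lemma dT_C a b : dT a b *+ 2 = C a b.
Proof.
have [[s [Hs [Hl Hw]]] Hm] := Hd a b.
apply/le_anti/andP; split; last by rewrite -Hw -Hl C_path.
have [s' [Hp Hu Hl']] := upath a b.
have H1 := Hm s' Hp Hl'.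
have H2 := C_uniq Hp Hu; rewrite Hl' in H2.
by rewrite H2 lerMn2r H1 orbT.
Qed.

Lemma dT_sym a b : dT a b = dT b a.
Proof.
have : dT a b *+ 2 = dT b a *+ 2.
  by rewrite !dT_C /C; apply: eq_bigr => i _; rewrite addbC.
rewrite !mulr2n => H; lra.
Qed.

Variable r0 : U.

Definition sg i v := sd i v (+) sd i r0.

Lemma sg_step i u y : eT i.1 i.2 -> eT u y ->
  ([set u; y] == [set i.1; i.2]) = sg i u (+) sg i y.
Proof.
move=> Ei Euy; rewrite (sd_step Ei Euy) /sg.
by case: (sd i u); case: (sd i y); case: (sd i r0).
Qed.

Lemma sg_const i u t : eT i.1 i.2 -> path eT u t ->
  (i.1 \notin u :: t) || (i.2 \notin u :: t) -> sg i u = sg i (last u t).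
Proof. by move=> Ei Hp Hn; rewrite /sg (sd_const Ei Hp Hn). Qed.

Lemma sg_ends i u t : eT i.1 i.2 -> path eT u t -> sg i u != sg i (last u t) ->
  (i.1 \in u :: t) && (i.2 \in u :: t).
Proof.
move=> Ei Hp; apply: contraR; rewrite negb_and => H.
by rewrite (sg_const Ei Hp H) eqxx.
Qed.

Lemma sg_uconst i u t : eT i.1 i.2 -> path eT u t -> uniq (u :: t) ->
  sg i u = sg i (last u t) -> forall v, v \in u :: t -> sg i v = sg i u.
Proof.
move=> Ei; elim: t u => [|y t IH] u /=.
  by move=> _ _ _ v; rewrite inE => /eqP->.
move=> /andP[Euy Hp] /andP[nu Ut] Hl v.
have := sg_step Ei Euy.
case: eqP => [E|_] Hs.
  have : u \in [set i.1; i.2] by rewrite -E !inE eqxx.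
  rewrite !inE => Hu.
  have Hn : (i.1 \notin y :: t) || (i.2 \notin y :: t).
    by case/orP: Hu => /eqP <-; rewrite nu ?orbT.
  move: Hl; rewrite -(sg_const Ei Hp Hn).
  by move: Hs; case: (sg i u); case: (sg i y).
have Huy : sg i u = sg i y by move: Hs; case: (sg i u); case: (sg i y).
rewrite inE => /orP[/eqP->//|Hv].
rewrite (IH y Hp Ut) // -Huy //.
Qed.

Lemma sg_r0 i : sg i r0 = false.
Proof. by rewrite /sg addbb. Qed.

Lemma lam i j x y z : eT i.1 i.2 -> eT j.1 j.2 ->
  sg i x -> sg j x -> sg i y -> ~~ sg j y -> sg j z -> ~~ sg i z -> False.
Proof.
move=> Ei Ej ix jx iy njy jz niz.
have [s1 [P1 U1 L1]] := upath x y.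
have c1 := sg_uconst Ei P1 U1.
have e1 := sg_ends Ej P1.
rewrite L1 ix iy in c1 e1.
have /andP[j1 j2] : (j.1 \in x :: s1) && (j.2 \in x :: s1).
  by apply: e1; rewrite jx (negbTE njy).
have ij1 := c1 erefl _ j1.
have [s2 [P2 U2 L2]] := upath x z.
have c2 := sg_uconst Ej P2 U2.
have e2 := sg_ends Ei P2.
rewrite L2 jx jz in c2 e2.
have /andP[i1 i2] : (i.1 \in x :: s2) && (i.2 \in x :: s2).
  by apply: e2; rewrite ix (negbTE niz).
have ji1 := c2 erefl _ i1.
have ji2 := c2 erefl _ i2.
have Hii : sg i i.1 (+) sg i i.2 = true.
  by rewrite -(sg_step Ei Ei); exact: eqxx.
have [p [ip jp]] : exists p, sg i p = false /\ sg j p = true.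
  move: Hii; case Hi1: (sg i i.1) => /= Hi2.
    by exists i.2; rewrite ji2 (negbTE Hi2).
  by exists i.1; rewrite Hi1 ji1.
have [s3 [P3 U3 L3]] := upath p r0.
have c3 := sg_uconst Ei P3 U3.
have e3 := sg_ends Ej P3.
rewrite L3 sg_r0 ip in c3.
rewrite L3 sg_r0 jp in e3.
have /andP[k1 _] := e3 isT.
have := c3 erefl _ k1.
by rewrite ij1.
Qed.

Lemma keyineq a b c : (forall i, eT i.1 i.2 -> sg i a && sg i b -> sg i c) ->
  C b c + C r0 a <= C a b + C r0 c.
Proof.
move=> P; rewrite /C -!big_split /=; apply: ler_sum => i Ei.
rewrite -!mulrDr ler_wpM2l ?(ltW (wpos Ei)) // -!natrD ler_nat.
move: (P i Ei) => /implyP; apply/implyP; rewrite /sg.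
by case: (sd i a); case: (sd i b); case: (sd i c); case: (sd i r0).
Qed.

Lemma LT x y z : dT r0 y <= dT r0 x -> dT r0 z <= dT r0 x ->
  dT y z <= dT x y \/ dT y z <= dT x z.
Proof.
move=> Hy Hz.
case: (boolP [forall i : U * U, eT i.1 i.2 ==> (sg i x && sg i y ==> sg i z)]) => [H|H].
  have K : C y z + C r0 x <= C x y + C r0 z.
    apply: keyineq => i Ei; move/forallP: H => /(_ i); rewrite Ei /=.
    by move/implyP.
  rewrite -!dT_C !mulr2n in K.
  by left; lra.
move/forallPn: H => [i]; rewrite negb_imply => /andP[Ei].
rewrite negb_imply => /andP[/andP[ix iy] niz].
have K : C z y + C r0 x <= C x z + C r0 y.
  apply: keyineq => j Ej /andP[jx jz].
  apply/negPn/negP => njy.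
  exact: (lam Ei Ej ix jx iy njy jz niz).
rewrite -!dT_C !mulr2n in K.
by right; rewrite (dT_sym y z); lra.
Qed.

End Tree.

Lemma elim_cocycle (V : finType) (R : realFieldType) (Q : rel V) (c : V -> V -> bool) (k : V -> R) :
  (forall x y z, k y <= k x -> k z <= k x -> Q x y -> Q x z -> Q y z) ->
  (forall x y z, Q x y -> Q y z -> Q x z -> c x z = c x y (+) c y z) ->
  (forall x y, Q x y -> Q y x) -> (forall x y, Q x y -> c x y = c y x) ->
  (forall x, c x x = false) ->
  forall A : {set V}, exists h : V -> bool,
    forall u v, u \in A -> v \in A -> Q u v -> c u v = h u (+) h v.
Proof.
move=> Hk Htri HQs Hcs Hc0.
suff : forall n (A : {set V}), (#|A| <= n)%N -> exists h : V -> bool,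
    forall u v, u \in A -> v \in A -> Q u v -> c u v = h u (+) h v.
  by move=> H A; apply: (H #|A|).
elim=> [|n IH] A HA.
  exists (fun _ => false) => u v; move: HA; rewrite leqn0 cards_eq0 => /eqP ->.
  by rewrite inE.
case: (set_0Vmem A) => [->|[x0 x0A]].
  by exists (fun _ => false) => u v; rewrite inE.
case: (@arg_maxP _ R V x0 (mem A) k x0A) => x xA0 Hmax0.
have xA : x \in A := xA0.
have Hmax : forall j, j \in A -> k j <= k x := fun j Hj => Hmax0 j Hj.
set A' := A :\ x.
have [h Hh] : exists h : V -> bool, forall u v, u \in A' -> v \in A' -> Q u v -> c u v = h u (+) h v.
  by apply: IH; move: HA; rewrite /A' (cardsD1 x A) xA add1n ltnS.
case: (boolP [exists y in A', Q x y]) => [/existsP[y /andP[yA Qxy]]|Hn].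
  pose h' := fun v => if v == x then h y (+) c x y else h v.
  exists h' => u v uA vA Quv.
  have key : forall v, v \in A' -> Q x v -> c x v = h' x (+) h' v.
    move=> v' vA' Qxv.
    have nv : (v' == x) = false by move: vA'; rewrite !inE => /andP[/negbTE].
    have ky : k y <= k x by apply: Hmax; move: yA; rewrite !inE => /andP[].
    have kv : k v' <= k x by apply: Hmax; move: vA'; rewrite !inE => /andP[].
    have Qyv := Hk _ _ _ ky kv Qxy Qxv.
    rewrite /h' eqxx nv (Htri _ _ _ Qxy Qyv Qxv) (Hh _ _ yA vA' Qyv).
    by rewrite addbA (addbC (c x y)).
  case Eu: (u == x); case Ev: (v == x).
  - by rewrite (eqP Eu) (eqP Ev) Hc0 addbb.
  - have vA' : v \in A' by rewrite !inE Ev vA.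
    rewrite (eqP Eu) in Quv *; exact: key v vA' Quv.
  - have uA' : u \in A' by rewrite !inE Eu uA.
    rewrite (eqP Ev) in Quv *; rewrite (Hcs _ _ Quv) (key u uA' (HQs _ _ Quv)).
    by rewrite addbC.
  - have uA' : u \in A' by rewrite !inE Eu uA.
    have vA' : v \in A' by rewrite !inE Ev vA.
    by rewrite /h' Eu Ev Hh.
exists h => u v uA vA Quv.
case Eu: (u == x); case Ev: (v == x).
- by rewrite (eqP Eu) (eqP Ev) Hc0 addbb.
- have vA' : v \in A' by rewrite !inE Ev vA.
  move: Hn; rewrite negb_exists => /forallP /(_ v); rewrite vA' /= -(eqP Eu) Quv.
  by [].
- have uA' : u \in A' by rewrite !inE Eu uA.
  move: Hn; rewrite negb_exists => /forallP /(_ u); rewrite uA' /= -(eqP Ev) (HQs _ _ Quv).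
  by [].
- have uA' : u \in A' by rewrite !inE Eu uA.
  have vA' : v \in A' by rewrite !inE Ev vA.
  exact: Hh.
Qed.

Section Main.
Variables (R : realFieldType) (V : finType) (e : rel V) (g : nat)
  (U : finType) (eT : rel U) (w dT : U -> U -> R) (f : V -> U).
Hypothesis se : symmetric e.
Hypothesis ie : irreflexive e.
Hypothesis Hgir : forall c, is_cycle e c -> (g <= size c)%N.
Hypothesis seT : symmetric eT.
Hypothesis ieT : irreflexive eT.
Hypothesis cT : forall a b, connect eT a b.
Hypothesis aT : forall c, ~ is_cycle eT c.
Hypothesis wpos : forall a b, eT a b -> 0 < w a b.
Hypothesis wsym : forall a b, w a b = w b a.
Hypothesis Hd : forall a b, is_tdist eT w a b (dT a b).
Hypothesis Hnc : forall x y, exists d, is_gdist e x y d /\ (d%:R <= dT (f x) (f y)).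

Lemma xorF (x y : bool) : x (+) y = false -> x = y.
Proof. by case: x; case: y. Qed.

Definition theta : R := g%:R / 3 - 1.
Definition Q u v := dT (f u) (f v) < theta.

Lemma Hex u v : exists s, path e u s && (last u s == v) && ((size s)%:R <= dT (f u) (f v)).
Proof.
have [d [[[s [Hs [Hp Hl]]] _] Hle]] := Hnc u v.
by exists s; rewrite Hp Hl eqxx Hs Hle.
Qed.

Definition gam u v := xchoose (Hex u v).

Lemma gamP u v : [/\ path e u (gam u v), last u (gam u v) = v &
  (size (gam u v))%:R <= dT (f u) (f v)].
Proof.
by have /andP[/andP[H1 /eqP H2] H3] := xchooseP (Hex u v).
Qed.

Definition cc A u v := par A u (gam u v).

Lemma dTC a b : dT a b *+ 2 = C eT w a b.
Proof. exact: dT_C. Qed.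

Lemma dT_ge0 a b : 0 <= dT a b.
Proof.
have : 0 <= dT a b *+ 2.
  rewrite dTC /C; apply: sumr_ge0 => i Ei.
  by apply: mulr_ge0; [exact: ltW (wpos Ei) | exact: ler0n].
by rewrite mulr2n => H; lra.
Qed.

Lemma dT_aa a : dT a a = 0.
Proof.
have : dT a a *+ 2 = 0.
  by rewrite dTC /C big1 // => i _; rewrite addbb mulr0.
by rewrite mulr2n => H; lra.
Qed.

Lemma dTs a b : dT a b = dT b a.
Proof. exact: (dT_sym seT ieT cT aT wpos wsym Hd). Qed.

Lemma loop3 a b x y z : e a b -> Q x y -> Q y z -> Q z x ->
  cc [set a; b] x y (+) cc [set a; b] y z (+) cc [set a; b] z x = false.
Proof.
move=> eab Qxy Qyz Qzx.
have [P1 L1 S1] := gamP x y.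
have [P2 L2 S2] := gamP y z.
have [P3 L3 S3] := gamP z x.
pose W := gam x y ++ gam y z ++ gam z x.
have PW : path e x W by rewrite /W cat_path P1 /= L1 cat_path P2 /= L2 P3.
have LW : last x W = x by rewrite /W !last_cat L1 L2 L3.
have SW : (size W < g)%N.
  rewrite -(ltr_nat R) /W !size_cat !natrD.
  move: Qxy Qyz Qzx; rewrite /Q /theta => q1 q2 q3.
  lra.
have := closed_even se ie Hgir PW LW SW eab.
by rewrite /W !par_cat L1 L2 /cc addbA.
Qed.

Lemma Q_sym u v : Q u v -> Q v u.
Proof. by rewrite /Q dTs. Qed.

Lemma Q_refl u v : Q u v -> Q u u.
Proof. by rewrite /Q dT_aa => H; apply: le_lt_trans H; apply: dT_ge0. Qed.

Lemma cc0 A u : cc A u u = false.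
Proof.
have [_ _ S] := gamP u u; rewrite dT_aa in S.
rewrite /cc; case: (gam u u) S => //= y s.
by rewrite -natr1 => H; have := ltr_pwDr ltr01 (ler0n R (size s)); lra.
Qed.

Lemma cc_sym a b u v : e a b -> Q u v -> cc [set a; b] u v = cc [set a; b] v u.
Proof.
move=> eab Quv.
have := loop3 eab Quv (Q_sym Quv) (Q_refl Quv).
by rewrite cc0 addbF => /xorF.
Qed.

Lemma cc_tri a b x y z : e a b -> Q x y -> Q y z -> Q x z ->
  cc [set a; b] x z = cc [set a; b] x y (+) cc [set a; b] y z.
Proof.
move=> eab Qxy Qyz Qxz.
have := loop3 eab Qxy Qyz (Q_sym Qxz).
by rewrite -(cc_sym eab Qxz) => /xorF ->.
Qed.

Lemma cc_edge a b u v : e a b -> e u v -> Q u v -> cc [set a; b] u v = ([set u; v] == [set a; b]).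
Proof.
move=> eab euv Quv.
have [P1 L1 S1] := gamP u v.
pose W := rcons (gam u v) u.
have PW : path e u W by rewrite /W rcons_path P1 L1 se.
have LW : last u W = u by rewrite /W last_rcons.
have SW : (size W < g)%N.
  rewrite -(ltr_nat R) /W size_rcons -natr1.
  move: Quv; rewrite /Q /theta => q1.
  have := dT_ge0 (f u) (f v); lra.
have := closed_even se ie Hgir PW LW SW eab.
rewrite /W -cats1 par_cat L1 /= addbF /cc => /xorF ->.
by rewrite set2C.
Qed.

Lemma exists_h a b (v0 : V) : e a b ->
  exists hf : {ffun V -> bool}, forall u v, Q u v -> cc [set a; b] u v = hf u (+) hf v.
Proof.
move=> eab.
have Hk : forall x y z, dT (f v0) (f y) <= dT (f v0) (f x) ->
    dT (f v0) (f z) <= dT (f v0) (f x) -> Q x y -> Q x z -> Q y z.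
  move=> x y z ky kz; rewrite /Q => qy qz.
  case: (LT seT ieT cT aT wpos wsym Hd ky kz) => H; exact: le_lt_trans H _.
have [h Hh] := @elim_cocycle V R Q (cc [set a; b]) (fun u => dT (f v0) (f u)) Hk
  (fun x y z => @cc_tri a b x y z eab) Q_sym (fun x y => @cc_sym a b x y eab)
  (cc0 [set a; b]) setT.
exists [ffun u => h u] => u v Quv; rewrite !ffunE.
by apply: Hh; rewrite ?inE.
Qed.

Lemma countH (H : {set {set V}}) (v0 : V) :
  (forall B, B \in H -> exists u v, [/\ B = [set u; v], e u v & Q u v]) ->
  (#|H| < #|V|)%N.
Proof.
move=> HB.
have hex : forall A, exists hf : {ffun V -> bool}, (A \in H) ==>
    [forall u, forall v, Q u v ==> (cc A u v == hf u (+) hf v)].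
  move=> A; case: (boolP (A \in H)) => AH; last by exists [ffun=> false].
  have [a [b [EA eab _]]] := HB A AH.
  have [hf Hf] := exists_h v0 eab.
  exists hf; apply/forallP => u; apply/forallP => v; apply/implyP => Quv.
  by rewrite EA Hf.
pose hh A := xchoose (hex A).
have hhP : forall A, A \in H -> forall u v, Q u v -> cc A u v = hh A u (+) hh A v.
  move=> A AH u v Quv.
  have := xchooseP (hex A); move=> /implyP /(_ AH) /forallP /(_ u) /forallP /(_ v).
  by move=> /implyP /(_ Quv) /eqP.
pose F (p : {set {set V}} * bool) : {ffun V -> bool} :=
  [ffun v => (\big[addb/false]_(A in p.1) (hh A v (+) hh A v0)) (+) p.2].
have F0 : forall p, F p v0 = p.2.
  by move=> p; rewrite ffunE big1 // => A _; rewrite addbb.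
have FB : forall p : {set {set V}} * bool, p.1 \subset H -> forall B u v, B \in H ->
    B = [set u; v] -> e u v -> Q u v -> F p u (+) F p v = (B \in p.1).
  move=> [S b] /= SH B u v BH EB euv Quv.
  have xx : forall X Y c : bool, (X (+) c) (+) (Y (+) c) = X (+) Y by move=> [] [] [].
  rewrite !ffunE /= xx -big_split /=.
  have E1 : forall A, A \in S -> (hh A u (+) hh A v0) (+) (hh A v (+) hh A v0) = (B == A).
    move=> A AS; have AH : A \in H by exact: (subsetP SH).
    rewrite xx -(hhP A AH u v Quv).
    have [a [b' [EA eab _]]] := HB A AH.
    by rewrite EA (cc_edge eab euv Quv) -EA -EB.
  rewrite (eq_bigr _ E1).
  case: (boolP (B \in S)) => BS.
    rewrite (bigD1 B BS) eqxx big1 /= => [|A /andP[_ nA]].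
      by [].
    by rewrite eq_sym (negbTE nA).
  rewrite big1 => [|A AS]; first by [].
  apply/negP => /eqP EBA; by rewrite EBA AS in BS.
have Finj : {in setX (powerset H) [set: bool] &, injective F}.
  move=> [S b] [S' b'] /setXP[SH _] /setXP[S'H _] EF.
  rewrite powersetE in SH; rewrite powersetE in S'H.
  have Eb : b = b' by have := F0 (S, b); rewrite EF F0.
  congr pair; last exact: Eb.
  apply/setP => B; case: (boolP (B \in H)) => BH; last first.
    case: (boolP (B \in S)) => BS; first by rewrite (subsetP SH B BS) in BH.
    case: (boolP (B \in S')) => BS'; first by rewrite (subsetP S'H B BS') in BH.
    by [].
  have [u [v [EB euv Quv]]] := HB B BH.
  have E1 := FB (S, b) SH B u v BH EB euv Quv.
  have E2 := FB (S', b') S'H B u v BH EB euv Quv.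
  by rewrite /= -E1 -E2 EF.
have := card_in_imset Finj; rewrite cardsX card_powerset cardsT card_bool => Hc.
have := max_card (F @: setX (powerset H) [set: bool]).
rewrite Hc card_ffun card_bool => H2.
rewrite -(@ltn_exp2l 2) //; apply: leq_trans H2.
by rewrite ltn_Pmulr // expn_gt0.
Qed.

End Main.

Unset Implicit Arguments.
Set Strict Implicit.

Theorem lemma5p3 (R : realFieldType) (V : finType) (e : rel V) (n g : nat)
  (U : finType) (eT : rel U) (w : U -> U -> R) (dT : U -> U -> R) (f : V -> U) :
  simple_graph e -> #|V| = n -> girth e g ->
  weighted_tree eT w ->
  (forall a b, is_tdist eT w a b (dT a b)) ->
  (* non-contractive: d_T(f x, f y) >= d_G(x, y) *)
  (forall x y, exists d, is_gdist e x y d /\ (d%:R <= dT (f x) (f y))) ->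
  (#|[set A in edges e | [exists x, exists y,
        [&& A == [set x; y], e x y & g%:R / 3 - 1 <= dT (f x) (f y)]]]|%:R
     / #|edges e|%:R : R)
  >= (#|edges e|%:R - (n%:R - 1)) / #|edges e|%:R.
Proof.
move=> [se ie] Hn [[c0 [Hc0 _]] Hgir] [[seT ieT] [cT [aT [wpos wsym]]]] Hd Hnc.
have v0 : V by case: c0 Hc0 => [[]|v0 _ _] //; exact: v0.
set L := [set A in edges e | _].
pose H := [set A in edges e | ~~ [exists x, exists y,
        [&& A == [set x; y], e x y & g%:R / 3 - 1 <= dT (f x) (f y)]]].
have HB : forall B, B \in H -> exists u v, [/\ B = [set u; v], e u v & Q g dT f u v].
  move=> B; rewrite inE => /andP[BE Hl].
  move: BE; rewrite /edges => /imsetP[[u v] Euv EB].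
  rewrite inE /= in Euv.
  exists u, v; split => //.
  rewrite /Q /theta ltNge; apply/negP => Hle; move/negP: Hl; apply.
  by apply/existsP; exists u; apply/existsP; exists v; rewrite EB eqxx Euv Hle.
have cH := countH se ie Hgir seT ieT cT aT wpos wsym Hd Hnc v0 HB.
have Hc : (#|L| + #|H| = #|edges e|)%N.
  rewrite -(cardsID [set A | [exists x, exists y,
        [&& A == [set x; y], e x y & g%:R / 3 - 1 <= dT (f x) (f y)]]] (edges e)).
  congr (_ + _)%N; apply: eq_card => A; rewrite !inE; last by rewrite andbC.
  by [].
have Hi : 0 <= (#|edges e|%:R : R)^-1 by rewrite invr_ge0 ler0n.
apply: (ler_wpM2r Hi).
rewrite -Hc natrD.
have n0 : (0 < n)%N by rewrite -Hn (leq_ltn_trans _ cH).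
have : (#|H| <= n.-1)%N by rewrite -ltnS prednK // -Hn.
rewrite -(ler_nat R) => HH.
have Hn1 : (n.-1)%:R = n%:R - 1 :> R.
  by rewrite -{2}(prednK n0) -natr1 addrK.
rewrite Hn1 in HH; lra.
Qed.
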